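(* Let $\mathcal S\subseteq\mathcal X\cup\mathcal Y\cup\mathcal Z$ be a set of items with $w_Z(\mathcal S)\le t-1$, $w_Y(\mathcal S)\le T$, $p_Z(\mathcal S)\ge t-1$, $p_Y(\mathcal S)\ge T$, and such that there is no set $\mathcal S'\subseteq\mathcal X\cup\mathcal Y\cup\mathcal Z$ with $w(\mathcal S')\le w(\mathcal S)$ and $p(\mathcal S')>p(\mathcal S)$. Then there exists $i\in\{0,\dots,t-1\}$ with $\mathcal S\cap\mathcal Y=\mathcal Y_i$ and $\mathcal S\cap\mathcal Z=\mathcal Z_i$.
   Context: Let $n\ge1$, $B_n=\sum_{j=1}^{3n}(3n+1)^j$, $\widetilde{\mathcal A}_n=\{(3n+1)^{j_1}+(3n+1)^{j_2}+(3n+1)^{j_3}: j_1,j_2,j_3\in\{1,\dots,3n\}\}$. Let $t$ be a power of two, $\lg$ the base-2 logarithm, and for $i\in\{0,\dots,t-1\}$ let $\mathcal A_i=\{a^i_1,\dots,a^i_{3n}\}$ be a set of $3n$ integers from $\widetilde{\mathcal A}_n$ with sum $3B_n$. Let $X=3tnB_n$, $B=B_n+nX$, $Y=3t^2nB$, $Z=(\lg t)^2Y^2 3^{(\lg t)^2}$, $T=\sum_{k=0}^{(\lg t)^2-1}3^k$, and fix a bijection $f:\{0,\dots,\lg t-1\}^2\to\{0,\dots,(\lg t)^2-1\}$. Items (weight $w$, profit $p$): encoding items $x^i_j$ ($0\le i\le t-1$, $1\le j\le 3n$) with $w=X+a^i_j$, $p=X+a^i_j+3iB$, forming $\mathcal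 X$; quadratization items forming $\mathcal Y$: for $0\le k<\ell\le\lg t-1$, $y^{1,0}_{k,\ell}$ with $w=p=3^{f(k,\ell)}Y$, $y^{0,1}_{k,\ell}$ with $w=p=3^{f(\ell,k)}Y$, $y^{1,1}_{k,\ell}$ with $w=(3^{f(k,\ell)}+3^{f(\ell,k)})Y$, $p=w+2^{k+\ell}\cdot9nB$, and for $0\le k\le\lg t-1$, $y^{1,1}_{k,k}$ with $w=3^{f(k,k)}Y$, $p=w+2^{2k}\cdot4.5nB+2^k\cdot1.5nB$; index items forming $\mathcal Z$: for $0\le k\le\lg t-1$, $z^0_k$ with $w=p=2^kZ+\sum_{\ell=0}^{\lg t-1}3^{f(k,\ell)}Y$ and $z^1_k$ with $w=p=2^kZ+2^k\cdot 3B$. For a set $\mathcal S$ of items, $w(\mathcal S)=\sum_{x\in\mathcal S}w(x)$, $p(\mathcal S)=\sum_{x\in\mathcal S}p(x)$. For an item $x$: $w_Z(x)=\lfloor w(x)/Z\rfloor$, $p_Z(x)=\lfloor p(x)/Z\rfloor$, $w_Y(x)=\lfloor (w(x)-Z\,w_Z(x))/Y\rfloor$, $p_Y(x)=\lfloor (p(x)-Z\,p_Z(x))/Y\rfloor$; these are extended to sets of items by summation over the items. For $i\in\{0,\dots,t-1\}$ with binary digits $i(0),\dots,i(\lg t-1)$ ($i=\sum_k i(k)2^k$): $\mathcal Z_i=\{z^{i(k)}_k:0\le k\le\lg t-1\}$ and $\mathcal Y_i=\{y^{i(k),i(\ell)}_{k,\ell}:0\le k\le\ell\le\lg t-1,\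 (i(k),i(\ell))\neq(0,0)\}$. *)

(* Defs.v *)
From mathcomp Require Import all_boot.
Set Implicit Arguments. Unset Strict Implicit. Unset Printing Implicit Defensive.

Section Construction.
(* L = lg t, so t = 2^L; a i j = a^i_{j+1}; f the fixed bijection. *)
Variables (n L : nat) (a : 'I_(2 ^ L) -> 'I_(3 * n) -> nat)
          (f : 'I_L * 'I_L -> 'I_(L * L)).

Definition Bn : nat := \sum_(1 <= j < (3 * n).+1) (3 * n + 1) ^ j.
Definition Atilde (v : nat) : Prop :=
  exists j1 j2 j3, [/\ 1 <= j1 <= 3 * n, 1 <= j2 <= 3 * n, 1 <= j3 <= 3 * n &
    v = (3 * n + 1) ^ j1 + (3 * n + 1) ^ j2 + (3 * n + 1) ^ j3].

Definition Xc : nat := 3 * 2 ^ L * n * Bn.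
Definition Bc : nat := Bn + n * Xc.
Definition Yc : nat := 3 * (2 ^ L) ^ 2 * n * Bc.
Definition Zc : nat := L ^ 2 * Yc ^ 2 * 3 ^ (L ^ 2).
Definition Tc : nat := \sum_(k < L ^ 2) 3 ^ k.

(* Items: inl (i,j) = x^i_{j+1};
          inr (inl (k,l,b1,b2)) = y^{b1,b2}_{k,l} (only valid indices are items);
          inr (inr (k,b)) = z^b_k. *)
Definition item : finType :=
  ('I_(2 ^ L) * 'I_(3 * n) + (('I_L * 'I_L * bool * bool) + ('I_L * bool)))%type.

Definition valid (x : item) : bool :=
  match x with
  | inl _ => true
  | inr (inl (k, l, b1, b2)) =>
      ((k < l) && (b1 || b2)) || [&& (k == l :> nat), b1 & b2]
  | inr (inr _) => true
  end.

Definition allItems : {set item} := [set x | valid x].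
Definition Yitems : {set item} :=
  [set x | valid x & if x is inr (inl _) then true else false].
Definition Zitems : {set item} :=
  [set x | if x is inr (inr _) then true else false].

Definition weight (x : item) : nat :=
  match x with
  | inl (i, j) => Xc + a i j
  | inr (inl (k, l, b1, b2)) =>
      if b1 && b2 then
        (if k < l then (3 ^ f (k, l) + 3 ^ f (l, k)) * Yc
         else 3 ^ f (k, k) * Yc)
      else if b1 then 3 ^ f (k, l) * Yc
      else if b2 then 3 ^ f (l, k) * Yc
      else 0
  | inr (inr (k, b)) =>
      if b then 2 ^ k * Zc + 2 ^ k * 3 * Bc
      else 2 ^ k * Zc + \sum_(l < L) 3 ^ f (k, l) * Yc
  end.

(* For y^{1,1}_{k,k}: 2^{2k} 4.5 nB + 2^k 1.5 nB = (2^{2k} 9nB + 2^k 3nB)/2,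
   an exact division (the numerator is even). *)
Definition profit (x : item) : nat :=
  match x with
  | inl (i, j) => Xc + a i j + 3 * i * Bc
  | inr (inl (k, l, b1, b2)) =>
      if b1 && b2 then
        (if k < l then weight x + 2 ^ (k + l) * 9 * n * Bc
         else weight x + (2 ^ (2 * k) * 9 * n * Bc + 2 ^ k * 3 * n * Bc) %/ 2)
      else weight x
  | inr (inr _) => weight x
  end.

Definition wS (S : {set item}) : nat := \sum_(x in S) weight x.
Definition pS (S : {set item}) : nat := \sum_(x in S) profit x.

Definition wZ (x : item) : nat := weight x %/ Zc.
Definition pZ (x : item) : nat := profit x %/ Zc.
Definition wY (x : item) : nat := (weight x - Zc * wZ x) %/ Yc.
Definition pY (x : item) : nat := (profit x - Zc * pZ x) %/ Yc.
Definition wZS (S : {set item}) : nat := \sum_(x in S) wZ x.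
Definition pZS (S : {set item}) : nat := \sum_(x in S) pZ x.
Definition wYS (S : {set item}) : nat := \sum_(x in S) wY x.
Definition pYS (S : {set item}) : nat := \sum_(x in S) pY x.

Definition bit (i k : nat) : bool := odd (i %/ 2 ^ k).

Definition Zset (i : nat) : {set item} :=
  [set x : item | if x is inr (inr (k, b)) then b == bit i k else false].
Definition Yset (i : nat) : {set item} :=
  [set x : item | if x is inr (inl (k, l, b1, b2)) then
     [&& k <= l, b1 == bit i k, b2 == bit i l & b1 || b2] else false].

End Construction.

(* Main.v *)
Require Import Defs.
From mathcomp Require Import all_boot zify.
Set Implicit Arguments. Unset Strict Implicit. Unset Printing Implicit Defensive.
Lemma digits_one b m (d : 'I_m -> nat) : 1 < b ->
  (forall k, d k <= b) ->
  \sum_(k < m) d k * b ^ k = \sum_(k < m) b ^ k -> forall k, d k = 1.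
Proof.
move=> b1; elim: m d => [|m IH] d dle; first by move=> _ [].
rewrite !big_ord_recl /= !expn0 muln1.
have e1 : forall F : 'I_m -> nat, \sum_(i < m) F i * b ^ (bump 0 i) = b * \sum_(i < m) F i * b ^ i.
  move=> F; rewrite big_distrr /=; apply: eq_bigr => i _.
  by rewrite /bump leq0n add1n expnS mulnCA.
have e2 : \sum_(i < m) b ^ (bump 0 i) = b * \sum_(i < m) b ^ i.
  rewrite big_distrr /=; apply: eq_bigr => i _; by rewrite /bump leq0n add1n expnS.
rewrite e1 e2 => E.
have d0 : d ord0 = 1.
  have := congr1 (modn^~ b) E; rewrite ![b * _]mulnC ![_ + _ * b]addnC !modnMDl (modn_small b1).
  have := dle ord0; rewrite leq_eqVlt => /orP[/eqP ->|lt]; first by rewrite modnn.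
  by rewrite modn_small.
move: E; rewrite d0 => /eqP; rewrite eqn_add2l eqn_mul2l => /orP[/eqP b0|/eqP E].
  by rewrite b0 in b1.
have := IH (fun i => d (lift ord0 i)) (fun i => dle _) E.
move=> H k; case: (unliftP ord0 k) => [j ->|->] //.
Qed.

Lemma sum_bound (T : finType) (S : {set T}) (c : T -> nat) (us : seq T) :
  (forall x, x \in S -> c x <= \sum_(u <- us) (x == u)) ->
  \sum_(x in S) c x <= size us.
Proof.
move=> H; apply: leq_trans (leq_sum _ H) _; rewrite exchange_big /=.
rewrite -sum1_size.
apply: leq_sum => u _.
rewrite (bigID (pred1 u)) /=.
rewrite [X in _ + X]big1; last by move=> x /andP[_ /negbTE ->].
rewrite addn0.
rewrite (eq_bigr (fun _ => 1)); last by move=> x /andP[_ ->].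
rewrite sum1_card (@leq_trans #|pred1 u|) ?card1 //.
apply/card_le1_eqP => x y; rewrite !unfold_in /= => /andP[_ /eqP->] /andP[_ /eqP->] //.
Qed.

Definition zi n L (k : 'I_L) (b : bool) : item n L := inr (inr (k, b)).
Definition yi n L (k l : 'I_L) (b1 b2 : bool) : item n L := inr (inl (k, l, b1, b2)).

Definition covq n L (x : item n L) (q : 'I_L * 'I_L) : nat :=
 match x with
 | inl _ => 0
 | inr (inl (k, l, b1, b2)) => (b1 && (q == (k, l))) + [&& b2, q == (l, k) & k != l]
 | inr (inr (k, b)) => ~~ b && (q.1 == k)
 end.
Definition zc n L (x : item n L) (k : 'I_L) : nat :=
 match x with inr (inr (k', _)) => k' == k | _ => false end.

Definition x1 n L (q : 'I_L * 'I_L) : item n L := zi n q.1 false.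
Definition x2 n L (q : 'I_L * 'I_L) : item n L :=
  if q.1 < q.2 then yi n q.1 q.2 true false
  else if q.2 < q.1 then yi n q.2 q.1 false true else yi n q.1 q.1 true true.
Definition x3 n L (q : 'I_L * 'I_L) : item n L :=
  if q.1 <= q.2 then yi n q.1 q.2 true true else yi n q.2 q.1 true true.

Lemma ptw n L (x : item n L) q : valid x ->
  covq x q <= (x == x1 n q) + (x == x2 n q) + (x == x3 n q).
Proof.
case: q => a b.
case: x => [[i j]|[[[[k l] b1] b2]|[k b0]]] //=; last first.
  rewrite /x1 /zi /=; case: b0 => //= _.
  by case: eqP => [->|]; rewrite ?eqxx.
move=> V.
have [b1T|] := boolP (b1 && ((a, b) == (k, l))).
  move/andP: b1T => [b1T /eqP [ea eb]]; subst a b; case: b1 b1T V => // _ V.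
  move: V; case: (ltngtP k l) => kl /=.
  - rewrite /x2 /x3 /yi /= kl (ltnW kl) /=.
    have -> : ((k, l) == (l, k)) = false.
      by apply/negbTE; apply/negP => /eqP [e]; move: kl; rewrite e ltnn.
    rewrite andbF; case: b2 => _; rewrite ?eqxx /=; lia.
  - by [].
  - have e : k = l by apply: val_inj.
    subst l; rewrite /x2 /x3 /yi /= ltnn leqnn /=.
    by case: b2 => // _; rewrite !eqxx.
rewrite negb_and => H1.
have [b2T|] := boolP [&& b2, (a, b) == (l, k) & k != l].
  move/and3P: b2T => [b2T /eqP [ea eb] kl]; subst a b; case: b2 b2T V => // _ V.
  move: V; case: (ltngtP k l) => klt /=.
  - have h1 : (l < k) = false by rewrite ltnNge (ltnW klt).
    have h2 : (l <= k) = false by rewrite leqNgt klt.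
    rewrite /x2 /x3 /yi /= h1 klt h2 /= => _.
    by case: b1 H1 => _; rewrite eqxx; lia.
  - by [].
  - by move: kl; rewrite -(inj_eq val_inj) /= klt eqxx.
by [].
Qed.

Lemma ptwz n L (x : item n L) k :
  zc x k <= (x == zi n k false) + (x == zi n k true).
Proof.
case: x => [[i j]|[[[[k' l] b1] b2]|[k' b0]]] //=.
rewrite /zi /=. case: eqP => [->|]; case: b0; rewrite ?eqxx; lia.
Qed.

Lemma sum_two (T : finType) (S : {set T}) (c : T -> nat) u v :
  u \in S -> v \in S -> u != v -> c u + c v <= \sum_(x in S) c x.
Proof.
move=> uS vS uv; rewrite (big_setD1 u uS) /= leq_add2l (big_setD1 v) /= ?leq_addr //.
by rewrite !inE eq_sym uv.
Qed.

Lemma sum_pos (T : finType) (S : {set T}) (c : T -> nat) :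
  0 < \sum_(x in S) c x -> exists2 x, x \in S & 0 < c x.
Proof.
move=> H.
case: (boolP [exists x in S, 0 < c x]) => [/exists_inP[x xS cx]|/exists_inP N]; first by exists x.
rewrite big1 in H => // x xS; apply/eqP; rewrite -leqn0 leqNgt; apply/negP => cx.
by apply: N; exists x.
Qed.

Lemma geo b m : 0 < b -> (\sum_(k < m) b ^ k) * b.-1 + 1 = b ^ m.
Proof.
move=> b0; elim: m => [|m IH]; first by rewrite big_ord0.
rewrite big_ord_recr /= mulnDl -addnAC IH expnS.
case: b b0 {IH} => //= b _; set X := _ ^ m; nia.
Qed.

Lemma decomp Z Y c V e : 0 < Y -> e < Y -> (V + 1) * Y <= Z ->
  (c * Z + (V * Y + e)) %/ Z = c /\ ((c * Z + (V * Y + e)) - Z * c) %/ Y = V.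
Proof.
move=> Y0 eY VZ.
have Z0 : 0 < Z by apply: leq_trans VZ; rewrite muln_gt0 addn1.
split.
  rewrite divnMDl // divn_small ?addn0 //.
  by apply: leq_trans VZ; rewrite mulnDl mul1n ltn_add2l.
by rewrite mulnC addKn divnMDl // divn_small ?addn0.
Qed.

Lemma covq_le1 n L (x : item n L) q : covq x q <= 1.
Proof.
case: x => [[i j]|[[[[k l] b1] b2]|[k b0]]] //=; last by case: (~~ b0 && _).
case: eqP => [->|_]; last by case: b1; case: [&& _, _ & _].
case: b1; case: b2 => //=; case: eqP => //= -[-> _]; rewrite eqxx //.
Qed.

Lemma sumA L (f : 'I_L * 'I_L -> 'I_(L * L)) g (fK : cancel f g) (gK : cancel g f)
   (c : bool) q :
  \sum_(p < L * L) (c && (g p == q)) * 3 ^ p = c * 3 ^ f q.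
Proof.
rewrite (reindex f) /=; last by apply: onW_bij; exists g.
under eq_bigr do rewrite fK.
rewrite (bigD1 q) //= eqxx andbT big1 ?addn0 // => q' /negbTE ->.
by rewrite andbF.
Qed.

Lemma sumZ0 L (f : 'I_L * 'I_L -> 'I_(L * L)) g (fK : cancel f g) (gK : cancel g f) k :
  \sum_(p < L * L) ((g p).1 == k) * 3 ^ p = \sum_(l < L) 3 ^ f (k, l).
Proof.
rewrite (reindex f) /=; last by apply: onW_bij; exists g.
under eq_bigr do rewrite fK.
transitivity (\sum_(i < L) \sum_(j < L) (i == k) * 3 ^ f (i, j)).
  by rewrite pair_big /=; apply: eq_bigr => -[i j].
rewrite (bigD1 k) //= [X in _ + X]big1 ?addn0.
  by apply: eq_bigr => l _; rewrite eqxx mul1n.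
by move=> i /negbTE ik; apply: big1 => j _; rewrite ik.
Qed.

Lemma sumY n L (f : 'I_L * 'I_L -> 'I_(L * L)) g (fK : cancel f g) (gK : cancel g f) k l b1 b2 :
  \sum_(p < L * L) covq (yi n k l b1 b2) (g p) * 3 ^ p =
  b1 * 3 ^ f (k, l) + (b2 && (k != l)) * 3 ^ f (l, k).
Proof.
rewrite -(sumA fK gK b1 (k, l)) -(sumA fK gK (b2 && (k != l)) (l, k)) -big_split.
apply: eq_bigr => p _; rewrite /covq /yi /= -mulnDl; congr (_ * _); congr (_ + _).
by case: b2; case: (g p == _); case: (k != l).
Qed.

Lemma sumZ L k (b : bool) n :
  \sum_(j < L) zc (zi n k b) j * 2 ^ j = 2 ^ k.
Proof.
rewrite /zc /zi (bigD1 k) //= eqxx big1 ?addn0 ?mul1n // => j /negbTE jk.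
by rewrite eq_sym jk.
Qed.

Lemma Bn_term n j : 1 <= j <= 3 * n -> (3 * n + 1) ^ j <= Bn n.
Proof.
move=> /andP[j1 j2]; rewrite /Bn (bigD1_seq j) ?mem_index_iota ?iota_uniq //=.
  exact: leq_addr.
by rewrite j1 ltnS.
Qed.

Lemma Bn_pos n : 1 <= n -> 0 < Bn n.
Proof.
move=> n1; apply: leq_trans (Bn_term (j := 1) _); first by rewrite expn1 addn1.
by rewrite leqnn /=; lia.
Qed.

Lemma Atilde_le n v : Atilde n v -> v <= 3 * Bn n.
Proof.
move=> [j1 [j2 [j3 [h1 h2 h3 ->]]]].
have := Bn_term h1; have := Bn_term h2; have := Bn_term h3; lia.
Qed.

Lemma Yc_pos n L : 1 <= n -> 0 < Yc n L.
Proof.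
move=> n1; rewrite /Yc /Bc !muln_gt0 expn_gt0 /= n1 /=.
have := Bn_pos n1; lia.
Qed.

Lemma vals_of n L a f (x : item n L) c V ew ep :
  weight a f x = c * Zc n L + (V * Yc n L + ew) ->
  profit a f x = c * Zc n L + (V * Yc n L + ep) ->
  ew < Yc n L -> ep < Yc n L -> (V + 1) * Yc n L <= Zc n L ->
  [/\ wZ a f x = c, pZ a f x = c, wY a f x = V & pY a f x = V].
Proof.
move=> hw hp ew1 ep1 VZ.
have Y0 : 0 < Yc n L by apply: leq_ltn_trans ew1.
have [w1 w2] := decomp c Y0 ew1 VZ.
have [p1 p2] := decomp c Y0 ep1 VZ.
by rewrite /wY /pY /wZ /pZ hw hp w1 w2 p1 p2.
Qed.

Definition zv n L (x : item n L) := \sum_(k < L) zc x k * 2 ^ k.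
Definition yv n L (g : 'I_(L * L) -> 'I_L * 'I_L) (x : item n L) :=
  \sum_(p < L * L) covq x (g p) * 3 ^ p.

Lemma yv_bound n L g (x : item n L) : 1 <= n -> 0 < L -> (yv g x + 1) * Yc n L <= Zc n L.
Proof.
move=> n1 L1.
have h1 : yv g x <= \sum_(p < L * L) 3 ^ p.
  apply: leq_sum => p _; have := covq_le1 x (g p); case: (covq _ _) => [|[]] //= _.
  by rewrite mul1n.
have h2 := geo (L * L) (isT : 0 < 3).
have Y1 := Yc_pos L n1.
rewrite /Zc -mulnn; move: h1 h2 Y1.
set P := 3 ^ (L * L); set S := \sum_(p < _) _; set Y := Yc n L; set V := yv g x.
move=> h1 h2 Y1.
have : V + 1 <= P by rewrite -h2 /=; lia.
have : 1 <= L * L by rewrite muln_gt0 L1.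
move: (L * L) => M M1 VP.
rewrite (_ : M * Y ^ 2 * P = (M * Y) * (P * Y)); last by rewrite !mulnA; lia.
rewrite -[X in X <= _]mul1n leq_mul //; first by rewrite muln_gt0; lia.
by rewrite leq_mul.
Qed.

Lemma vals n L a f g (fK : cancel f g) (gK : cancel g f) (x : item n L) :
  1 <= n -> 0 < L -> (forall i j, Atilde n (a i j)) -> valid x ->
  [/\ wZ a f x = zv x, pZ a f x = zv x, wY a f x = yv g x & pY a f x = yv g x].
Proof.
move=> n1 L1 hA.
have YZ := yv_bound g x n1 L1.
have Y1 := Yc_pos L n1.
have B1 := Bn_pos n1.
case: x YZ => [[i j]|[[[[k l] b1] b2]|[k b0]]] YZ V.
- have z0 : zv (inl (i, j) : item n L) = 0 by apply: big1.
  have y0 : yv g (inl (i, j) : item n L) = 0 by apply: big1.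
  rewrite z0 y0 in YZ *.
  have hp : profit a f (inl (i, j)) < Yc n L.
    rewrite /profit /Yc /Bc /Xc.
    have := Atilde_le (hA i j); have := ltn_ord i.
    have t1 : 0 < 2 ^ L by rewrite expn_gt0.
    move=> it aB; set t := 2 ^ L in t1 it *.
    have tn : 1 <= t * n by rewrite muln_gt0 t1.
    have e1 : 3 * Bn n <= 3 * t * n * Bn n by nia.
    set B := Bn n; set X := 3 * t * n * B; set BB := B + n * X.
    have e2 : X <= BB by rewrite /BB; nia.
    have e3 : (i : nat) + 1 <= t by rewrite addn1.
    have e4 : t <= t ^ 2 * n by nia.
    nia.
  apply: (vals_of (c := 0) (V := 0) (ew := weight a f (inl (i, j))) (ep := profit a f (inl (i, j)))) => //.
  + by apply: leq_ltn_trans hp; rewrite /weight /profit leq_addr.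
- move: V => /= V.
  have zz : zv (inr (inl (k, l, b1, b2)) : item n L) = 0 by apply: big1.
  have yy : yv g (inr (inl (k, l, b1, b2)) : item n L) =
      b1 * 3 ^ f (k, l) + (b2 && (k != l)) * 3 ^ f (l, k) := sumY n fK gK k l b1 b2.
  have Bc1 : 0 < Bc n L by rewrite /Bc; lia.
  rewrite zz; rewrite yy in YZ *; clear zz yy.
  case/orP: V => [/andP[kl b12]|/and3P[/eqP kl b1T b2T]].
  + have kl' : (k != l) = true by rewrite -(inj_eq val_inj) neq_ltn kl.
    rewrite kl' in YZ *.
    case: b1 b2 b12 YZ => [] [] // _ YZ; rewrite ?mul1n ?mul0n ?addn0 ?add0n in YZ *.
    * apply: (vals_of (c := 0) (V := 3 ^ f (k, l) + 3 ^ f (l, k)) (ew := 0)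
         (ep := 2 ^ (k + l) * 9 * n * Bc n L)) => //.
      - by rewrite /weight /= kl addn0.
      - by rewrite /profit /weight /= kl.
      - have h : 2 ^ (k + l) * 4 <= (2 ^ L) ^ 2.
          rewrite -mulnn -expnD (_ : 4 = 2 ^ 2) // -expnD leq_exp2l //; have := ltn_ord l; lia.
        have P1 : 0 < 2 ^ (k + l) by rewrite expn_gt0.
        rewrite /Yc; move: h P1; set P := 2 ^ (k + l); set T := (2 ^ L) ^ 2.
        move=> h P1; nia.
    * apply: (vals_of (c := 0) (V := 3 ^ f (k, l)) (ew := 0) (ep := 0)) => //.
      - by rewrite /weight /= addn0.
      - by rewrite /profit /weight /= addn0.
    * apply: (vals_of (c := 0) (V := 3 ^ f (l, k)) (ew := 0) (ep := 0)) => //.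
      - by rewrite /weight /= addn0.
      - by rewrite /profit /weight /= addn0.
  + have e : k = l by apply: val_inj.
    subst l; case: b1 b1T YZ => // _; case: b2 b2T => // _ YZ.
    rewrite eqxx /= mul1n addn0 in YZ *.
    apply: (vals_of (c := 0) (V := 3 ^ f (k, k)) (ew := 0)
         (ep := (2 ^ (2 * k) * 9 * n * Bc n L + 2 ^ k * 3 * n * Bc n L) %/ 2)) => //.
    * by rewrite /weight /= ltnn addn0.
    * by rewrite /profit /weight /= ltnn.
    * have h1 : 2 ^ (2 * k) * 4 <= (2 ^ L) ^ 2.
        rewrite -mulnn -expnD (_ : 4 = 2 ^ 2) // -expnD leq_exp2l //; have := ltn_ord k; lia.
      have h2 : 2 ^ k * 2 <= 2 ^ L by rewrite -expnSr leq_exp2l.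
      have h3 : 2 ^ L <= (2 ^ L) ^ 2 by rewrite -mulnn leq_pmulr // expn_gt0.
      have h4 := leq_trunc_div (2 ^ (2 * k) * 9 * n * Bc n L + 2 ^ k * 3 * n * Bc n L) 2.
      rewrite /Yc; move: h1 h2 h3 h4.
      set P := 2 ^ (2 * k); set Q := 2 ^ k; set R := 2 ^ L; set T := R ^ 2.
      set E := _ %/ 2 => h1 h2 h3 h4.
      nia.
- have zz : zv (inr (inr (k, b0)) : item n L) = 2 ^ k by apply: (sumZ k b0 n).
  rewrite zz; clear V zz; case: b0 YZ => YZ.
  + have y0 : yv g (inr (inr (k, true)) : item n L) = 0 by apply: big1.
    rewrite y0 in YZ *.
    have hh : 2 ^ k * 3 * Bc n L < Yc n L.
      have kL : 2 ^ k < 2 ^ L by rewrite ltn_exp2l.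
      have Bc1 : 0 < Bc n L by rewrite /Bc; lia.
      rewrite /Yc; set t := 2 ^ L in kL *.
      have t1 : t <= t ^ 2 * n by rewrite -mulnn -mulnA leq_pmulr // muln_gt0 n1 (leq_ltn_trans _ kL).
      apply: (@leq_trans (t * 3 * Bc n L)); first by rewrite !ltn_mul2r Bc1 kL.
      apply: leq_trans (leq_mul (leq_mul t1 (leqnn 3)) (leqnn (Bc n L))) _.
      by rewrite [_ * 3]mulnC !mulnA.
    by apply: (vals_of (c := 2 ^ k) (V := 0) (ew := 2 ^ k * 3 * Bc n L) (ep := 2 ^ k * 3 * Bc n L)).
  + have yy : yv g (inr (inr (k, false)) : item n L) = \sum_(l < L) 3 ^ f (k, l).
      by rewrite /yv /covq /= (sumZ0 fK gK).
    rewrite yy in YZ *.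
    by apply: (vals_of (c := 2 ^ k) (V := \sum_(l < L) 3 ^ f (k, l)) (ew := 0) (ep := 0)) => //; rewrite addn0 big_distrl.
Qed.

Lemma bit_sum L (h : 'I_L -> bool) (k : 'I_L) :
  odd ((\sum_(j < L) h j * 2 ^ j) %/ 2 ^ k) = h k.
Proof.
elim: L h k => [|L IH] h k; first by case: k.
rewrite big_ord_recl /= expn0 muln1.
have e : \sum_(i < L) h (lift ord0 i) * 2 ^ (bump 0 i) = (\sum_(i < L) h (lift ord0 i) * 2 ^ i) * 2.
  rewrite big_distrl /=; apply: eq_bigr => i _.
  by rewrite /bump leq0n add1n expnS mulnCA mulnC.
rewrite e.
case: (unliftP ord0 k) => [j ->|->] /=.
  rewrite /bump leq0n add1n expnS divnMA divnDMl // (divn_small (_ : h ord0 < 2)) ?add0n; first exact: IH.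
  by case: (h ord0).
by rewrite (_ : 2 ^ _ = 1) // divn1 oddD oddM /= andbF addbF; case: (h ord0).
Qed.

Lemma cnt3 (T : finType) (S : {set T}) (c : T -> nat) u1 u2 u3 :
  uniq [:: u1; u2; u3] -> 0 < c u1 -> 0 < c u2 -> 0 < c u3 ->
  (forall x, x \in S -> 0 < c x -> [\/ x = u1, x = u2 | x = u3]) ->
  \sum_(x in S) c x = 1 ->
  (u1 \in S) + (u2 \in S) + (u3 \in S) = 1.
Proof.
move=> /= /andP[]; rewrite !inE negb_or => /andP[n12 n13] /andP[n23 _] c1 c2 c3 cov D.
have ex : exists2 x, x \in S & 0 < c x by apply: sum_pos; rewrite D.
have two : forall u v, u \in S -> v \in S -> u != v -> 0 < c u -> 0 < c v -> False.
  move=> u v uS vS uv cu cv; have := sum_two c uS vS uv; rewrite D; lia.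
case: ex => x xS cx; case: (cov x xS cx) => ex; subst x.
- have -> : (u2 \in S) = false by apply/negP => h; apply: (two u1 u2).
  have -> : (u3 \in S) = false by apply/negP => h; apply: (two u1 u3).
  by rewrite xS.
- have -> : (u1 \in S) = false by apply/negP => h; apply: (two u1 u2).
  have -> : (u3 \in S) = false by apply/negP => h; apply: (two u2 u3).
  by rewrite xS.
- have -> : (u1 \in S) = false by apply/negP => h; apply: (two u1 u3).
  have -> : (u2 \in S) = false by apply/negP => h; apply: (two u2 u3).
  by rewrite xS.
Qed.

Lemma cnt2 (T : finType) (S : {set T}) (c : T -> nat) u1 u2 :
  u1 != u2 -> 0 < c u1 -> 0 < c u2 ->
  (forall x, x \in S -> 0 < c x -> x = u1 \/ x = u2) ->
  \sum_(x in S) c x = 1 ->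
  (u1 \in S) + (u2 \in S) = 1.
Proof.
move=> n12 c1 c2 cov D.
have ex : exists2 x, x \in S & 0 < c x by apply: sum_pos; rewrite D.
have two : forall u v, u \in S -> v \in S -> u != v -> 0 < c u -> 0 < c v -> False.
  move=> u v uS vS uv cu cv; have := sum_two c uS vS uv; rewrite D; lia.
case: ex => x xS cx; case: (cov x xS cx) => ex; subst x.
- have -> : (u2 \in S) = false by apply/negP => h; apply: (two u1 u2).
  by rewrite xS.
- have -> : (u1 \in S) = false by apply/negP => h; apply: (two u1 u2).
  by rewrite xS.
Qed.

Lemma ptw' n L (x : item n L) q : valid x -> 0 < covq x q ->
  [\/ x = x1 n q, x = x2 n q | x = x3 n q].
Proof.
move=> V c0; have := ptw q V.
case: eqP => [->|_]; first by constructor.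
case: eqP => [->|_]; first by constructor.
case: eqP => [->|_]; first by constructor.
move=> h; have : covq x q = 0 by lia.
by move=> e; rewrite e in c0.
Qed.

Lemma ptwz' n L (x : item n L) k : 0 < zc x k -> x = zi n k false \/ x = zi n k true.
Proof.
move=> c0; have := ptwz x k.
case: eqP => [->|_]; first by left.
case: eqP => [->|_]; first by right.
move=> h; have : zc x k = 0 by lia.
by move=> e; rewrite e in c0.
Qed.

Theorem lemma6 (n L : nat) (a : 'I_(2 ^ L) -> 'I_(3 * n) -> nat)
    (f : 'I_L * 'I_L -> 'I_(L * L)) :
  1 <= n ->
  bijective f ->
  (forall i j, Atilde n (a i j)) ->
  (forall i, \sum_(j < 3 * n) a i j = 3 * Bn n) ->
  forall S : {set item n L},
  S \subset allItems n L ->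
  wZS a f S <= 2 ^ L - 1 ->
  wYS a f S <= Tc L ->
  2 ^ L - 1 <= pZS a f S ->
  Tc L <= pYS a f S ->
  ~ (exists S' : {set item n L}, S' \subset allItems n L /\
        wS a f S' <= wS a f S /\ pS a f S < pS a f S') ->
  exists i : 'I_(2 ^ L),
    S :&: Yitems n L = Yset n L i /\ S :&: Zitems n L = Zset n L i.
Proof.
move=> n1 [g fK gK] hA _ S SA wZle wYle pZge pYge opt.
have t0 : 0 < 2 ^ L by rewrite expn_gt0.
case: (posnP L) => [L0|L1].
  exists (Ordinal t0); split; apply/setP => -[x|[[[[k l] b1] b2]|[k b]]]; rewrite !inE ?andbF //;
  by have := ltn_ord k; lia.
have Sv : forall x, x \in S -> valid x by move=> x /(subsetP SA); rewrite inE.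
have V x (xS : x \in S) := vals fK gK n1 L1 hA (Sv x xS).
have eZ : wZS a f S = \sum_(k < L) (\sum_(x in S) zc x k) * 2 ^ k.
  rewrite /wZS (eq_bigr (fun x => zv x)) => [|x xS]; last by case: (V x xS).
  rewrite /zv exchange_big /=; apply: eq_bigr => k _; by rewrite big_distrl.
have eZ' : pZS a f S = \sum_(k < L) (\sum_(x in S) zc x k) * 2 ^ k.
  rewrite /pZS (eq_bigr (fun x => zv x)) => [|x xS]; last by case: (V x xS).
  rewrite /zv exchange_big /=; apply: eq_bigr => k _; by rewrite big_distrl.
have wp : wZS a f S = pZS a f S by rewrite eZ eZ'.
have s2 : \sum_(k < L) 2 ^ k = 2 ^ L - 1.
  by rewrite -(geo L (isT : 0 < 2)) /= muln1 addnK.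
have DZ : forall k, \sum_(x in S) zc x k = 1.
  apply: (digits_one (b := 2)) => // [k|].
    rewrite (_ : 2 = size [:: zi n k false; zi n k true]) //.
    apply: sum_bound => x _; rewrite !big_cons big_nil addn0; exact: ptwz.
  by apply/eqP; rewrite eqn_leq s2 -eZ wZle wp pZge.
have eY : wYS a f S = \sum_(p < L * L) (\sum_(x in S) covq x (g p)) * 3 ^ p.
  rewrite /wYS (eq_bigr (fun x => yv g x)) => [|x xS]; last by case: (V x xS).
  rewrite /yv exchange_big /=; apply: eq_bigr => k _; by rewrite big_distrl.
have eY' : pYS a f S = \sum_(p < L * L) (\sum_(x in S) covq x (g p)) * 3 ^ p.
  rewrite /pYS (eq_bigr (fun x => yv g x)) => [|x xS]; last by case: (V x xS).
  rewrite /yv exchange_big /=; apply: eq_bigr => k _; by rewrite big_distrl.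
have wp' : wYS a f S = pYS a f S by rewrite eY eY'.
have s3 : \sum_(p < L * L) 3 ^ p = Tc L by rewrite /Tc mulnn.
have DY : forall p, \sum_(x in S) covq x (g p) = 1.
  apply: (digits_one (b := 3)) => // [p|].
    rewrite (_ : 3 = size [:: x1 n (g p); x2 n (g p); x3 n (g p)]) //.
    apply: sum_bound => x xS; rewrite !big_cons big_nil addn0 addnA; exact: ptw (Sv x xS).
  by apply/eqP; rewrite eqn_leq s3 -eY wYle wp' pYge.
have D q : \sum_(x in S) covq x q = 1 by have := DY (f q); rewrite fK.
have Zone k : (zi n k false \in S) + (zi n k true \in S) = 1.
  apply: (cnt2 (c := fun x => zc x k)) => //=.
  - by apply/eqP; rewrite /zi => -[].
  - by rewrite eqxx.
  - by rewrite eqxx.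
  - by move=> x _ /ptwz'.
set zs := fun k => zi n k true \in S.
have z0E k : (zi n k false \in S) = ~~ zs k.
  by have := Zone k; rewrite /zs; case: (_ \in S); case: (_ \in S).
set i := \sum_(k < L) zs k * 2 ^ k.
have iL : i < 2 ^ L.
  apply: (@leq_ltn_trans (\sum_(k < L) 2 ^ k)); last by rewrite s2; lia.
  by apply: leq_sum => k _; case: (zs k); rewrite ?mul1n ?mul0n.
have bitE (k : 'I_L) : bit i k = zs k := bit_sum zs k.
have swap (k l : 'I_L) : k < l -> yi n k l true false \in S ->
    yi n k l false true \in S -> yi n k l true true \notin S -> False.
  move=> kl u v w; apply: opt.
  set S0 := S :\ yi n k l true false :\ yi n k l false true.
  have wS0 : yi n k l true true \notin S0 by rewrite !inE (negbTE w) !andbF.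
  have vS : yi n k l false true \in S :\ yi n k l true false.
    by rewrite !inE v andbT; apply/eqP; rewrite /yi => -[].
  exists (yi n k l true true |: S0); split.
    apply/subsetP => x; rewrite !inE => /orP[/eqP->|/andP[_ /andP[_ xS]]]; first by rewrite /= kl.
    by have := subsetP SA x xS; rewrite inE.
  have eW : forall F : item n L -> nat, \sum_(x in S) F x =
      F (yi n k l true false) + (F (yi n k l false true) + \sum_(x in S0) F x).
    by move=> F; rewrite (big_setD1 _ u) (big_setD1 _ vS).
  have eW' : forall F : item n L -> nat, \sum_(x in yi n k l true true |: S0) F x =
      F (yi n k l true true) + \sum_(x in S0) F x.
    by move=> F; rewrite big_setU1.
  rewrite /wS /pS !eW !eW'.
  have w10 : weight a f (yi n k l true false) = 3 ^ f (k, l) * Yc n L by [].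
  have w01 : weight a f (yi n k l false true) = 3 ^ f (l, k) * Yc n L by [].
  have p10 : profit a f (yi n k l true false) = 3 ^ f (k, l) * Yc n L by [].
  have p01 : profit a f (yi n k l false true) = 3 ^ f (l, k) * Yc n L by [].
  have w11 : weight a f (yi n k l true true) = (3 ^ f (k, l) + 3 ^ f (l, k)) * Yc n L.
    by rewrite /weight /yi /= kl.
  have p11 : profit a f (yi n k l true true) = (3 ^ f (k, l) + 3 ^ f (l, k)) * Yc n L
     + 2 ^ (k + l) * 9 * n * Bc n L.
    by rewrite /profit /weight /yi /= kl.
  have : 0 < 2 ^ (k + l) * 9 * n * Bc n L.
    by rewrite !muln_gt0 expn_gt0 n1 /Bc; have := Bn_pos n1; lia.
  lia.
exists (Ordinal iL); split; apply/setP => -[x|[[[[k l] b1] b2]|[k b]]]; rewrite !inE /= ?andbF //.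
- rewrite !bitE andbT.
  case: (ltngtP k l) => kl.
  + have h1 : (l < k) = false by rewrite ltnNge (ltnW kl).
    have h2 : (l <= k) = false by rewrite leqNgt kl.
    have kl' : (k != l) = true by rewrite -(inj_eq val_inj) neq_ltn kl.
    have P1 : (~~ zs k) + (yi n k l true false \in S) + (yi n k l true true \in S) = 1.
      rewrite -z0E; apply: (cnt3 (c := fun x => covq x (k, l))) => //=.
      - by rewrite inE andbT; apply/eqP; rewrite /yi => -[].
      - by rewrite eqxx.
      - by rewrite eqxx.
      - by rewrite eqxx.
      - by move=> x xS /(ptw' (Sv x xS)); rewrite /x1 /x2 /x3 /= kl (ltnW kl).
    have P2 : (~~ zs l) + (yi n k l false true \in S) + (yi n k l true true \in S) = 1.
      rewrite -z0E; apply: (cnt3 (c := fun x => covq x (l, k))) => //=.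
      - by rewrite inE andbT; apply/eqP; rewrite /yi => -[].
      - by rewrite eqxx.
      - by rewrite eqxx kl'.
      - by rewrite eqxx kl' addn1.
      - by move=> x xS /(ptw' (Sv x xS)); rewrite /x1 /x2 /x3 /= h1 kl h2.
    have sw := swap k l kl.
    rewrite /=.
    move: P1 P2 sw; rewrite /yi.
    case: b1; case: b2 => /=; rewrite ?andbF ?andbT //;
    case: (inr (inl (k, l, true, false)) \in S); case: (inr (inl (k, l, false, true)) \in S);
    case: (inr (inl (k, l, true, true)) \in S); case: (zs k); case: (zs l) => /= P1 P2 sw;
    try (exfalso; by apply: sw); lia.
  + have h1 : (k < l) = false by rewrite ltnNge (ltnW kl).
    have h2 : (k <= l) = false by rewrite leqNgt kl.
    by rewrite /= andbF.
  + have e : k = l by apply: val_inj.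
    subst l.
    have P : (~~ zs k) + (yi n k k true true \in S) = 1.
      rewrite -z0E; apply: (cnt2 (c := fun x => covq x (k, k))) => //=.
      - by rewrite eqxx.
      - by rewrite eqxx.
      - move=> x xS /(ptw' (Sv x xS)); rewrite /x1 /x2 /x3 /= ltnn leqnn.
        by case=> ->; [left|right|right].
    rewrite /=.
    move: P; rewrite /yi.
    case: b1; case: b2 => /=; rewrite ?andbF ?andbT //;
    case: (inr (inl (k, k, true, true)) \in S); case: (zs k) => /= P; lia.
- rewrite bitE andbT; case: b.
    by rewrite /zs; case: (_ \in S).
  have := z0E k; rewrite /zi => ->; by case: (zs k).
Qed.
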